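(* Let $(D,\chi)$ be a shaped oriented link diagram with flattening $\mathfrak f$, and let $c$ be a crossing of $D$ of sign $\epsilon$, with local parameters $\mu_1,\mu_2$ (of the strands through $1$ and $2$), $\beta_1,\beta_2,\beta_{1'},\beta_{2'}$, $\gamma_N,\gamma_W,\gamma_S,\gamma_E$. If one of these local parameters $x$ is replaced by $x+k$ with $k\in\mathbb Z$ (all others unchanged), then $\mathcal V(c,\mathfrak f)$ changes by $2\pi^2 i\,k$ times the corresponding coefficient below (modulo $2\pi^2 i\mathbb Z$): \[ \begin{aligned} \mu_1&:\ -\epsilon(\beta_{1'}-\beta_1)+\gamma_W-\gamma_S, & \mu_2&:\ \epsilon(\beta_{2'}-\beta_2)+\gamma_S-\gamma_E,\\ \beta_1&:\ \gamma_W-\gamma_N-\epsilon\mu_1, & \beta_2&:\ \gamma_S-\gamma_W+\epsilon\mu_2,\\ \beta_{1'}&:\ \gamma_E-\gamma_S+\epsilon\mu_1, & \beta_{2'}&:\ \gamma_N-\gamma_E-\epsilon\mu_2,\\ \gamma_N&:\ \beta_1-\beta_{2'}, & \gamma_W&:\ \beta_2-\beta_1-\mu_1,\\ \gamma_S&:\ \beta_{1'}+\mu_1-\beta_2-\mu_2, & \gamma_E&:\ \beta_{2'}+\mu_2-\beta_{1'}. \end{aligned} \]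
   Context: Oriented link diagram $D$; segments are edges of its underlying $4$-valent planar graph, regions are components of the complement. At each crossing, rotate so both strands point right; label incoming upper-left segment $1$, incoming lower-left segment $2$, outgoing lower-right $1'$ (continuation of $1$), outgoing upper-right $2'$ (continuation of $2$); regions $N$ (top), $S$ (bottom), $W$ (left), $E$ (right); $\epsilon=\pm1$ the crossing sign. A shaping assigns $\chi_i=(a_i,b_i,m_i)\in(\mathbb C^\times)^3$ to segments with, at each crossing, $m_{1'}=m_1,m_{2'}=m_2$ and (positive) $A=1-\frac{m_1b_1}{b_2}(1-\frac{a_1}{m_1})(1-\frac{1}{m_2a_2})$, $a_{1'}=a_1/A$, $a_{2'}=a_2A$, $b_{1'}=\frac{m_2b_2}{m_1}(1-m_2a_2(1-\frac{b_2}{m_1b_1}))^{-1}$, $b_{2'}=b_1(1-\frac{m_1}{a_1}(1-\frac{b_2}{m_1b_1}))$, or (negative) $\tilde A=1-\frac{b_2}{m_1b_1}(1-m_1a_1)(1-\frac{m_2}{a_2})$, $a_{1'}=a_1/\tilde A$, $a_{2'}=a_2\tilde A$, $b_{1'}=\frac{m_2b_2}{m_1}(1-\frac{a_2}{m_2}(1-\frac{m_1b_1}{b_2}))$, $b_{2'}=b_1(1-\frac{1}{m_1a_1}(1-\frac{m_1b_1}{b_2}))^{-1}$, all finite nonzero. Pinched: $b_{2'}=b_1$. Flattening: $\mu_j$ per component ($e^{2\pi i\mu_j}=m_j$), $\beta_k$ per segment ($e^{2\pi i\beta_k}=b_k$), $\gamma_R$ per region ($e^{2\pi i(\gamma_{R'}-\gamma_R)}=a_k$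 when $R',R$ lie right, left of segment $k$), $\kappa$ at each non-pinched crossing with $e^{2\pi i\kappa}=e^{2\pi i\gamma_N}/(1-(b_{2'}/b_1)^\epsilon)$. Lifted dilogarithm: for $w=e^{\zeta^0}\ne1$, $e^{\zeta^1}(1-w)=1$, $p^0=(\zeta^0-\operatorname{Log}w)/2\pi i$, $p^1=(\zeta^1+\operatorname{Log}(1-w))/2\pi i$, $\mathcal L(\zeta^0,\zeta^1)=\operatorname{Li}_2(w)+\frac12\operatorname{Log}w\operatorname{Log}(1-w)-\frac{\pi^2}6+\pi i(p^0\operatorname{Log}(1-w)+p^1\operatorname{Log}w)\in\mathbb C/2\pi^2\mathbb Z$ (continuous extension understood). Non-pinched crossing: $\zeta_N^0=2\pi i\epsilon(\beta_{2'}-\beta_1)$, $\zeta_N^1=2\pi i(\kappa-\gamma_N)$; $\zeta_W^0=2\pi i\epsilon(\beta_2-\beta_1-\mu_1)$, $\zeta_W^1=2\pi i(\kappa-\gamma_W+\epsilon\mu_1)$; $\zeta_S^0=2\pi i\epsilon(\beta_2-\beta_{1'}+\mu_2-\mu_1)$, $\zeta_S^1=2\pi i(\kappa-\gamma_S+\epsilon(\mu_1-\mu_2))$; $\zeta_E^0=2\pi i\epsilon(\beta_{2'}-\beta_{1'}+\mu_2)$, $\zeta_E^1=2\pi i(\kappa-\gamma_E-\epsilon\mu_2)$; $\mathcal V(c,\mathfrak f)=-i\epsilon[\mathcal L(\zeta_N^0,\zeta_N^1)-\mathcal L(\zeta_W^0,\zeta_W^1)+\mathcal L(\zeta_S^0,\zeta_S^1)-\mathcal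 L(\zeta_E^0,\zeta_E^1)]\in\mathbb C/2\pi^2 i\mathbb Z$. Pinched crossing: $\mathcal V(c,\mathfrak f)=2\pi^2 i[\beta_1(\gamma_W-\gamma_N)-\beta_{1'}(\gamma_S-\gamma_E)+\beta_2(\gamma_S-\gamma_W)-\beta_{2'}(\gamma_E-\gamma_N)-\mu_1(\epsilon(\beta_1-\beta_{1'}+\mu_2)+\gamma_S-\gamma_W)-\mu_2(\epsilon(\beta_{2'}-\beta_2+\mu_1)+\gamma_E-\gamma_S)]$. *)

(* Defs.v *)
From Stdlib Require Import Reals ZArith.
From Coquelicot Require Import Coquelicot.

Open Scope C_scope.

Definition Cexp (z : C) : C :=
  (exp (fst z) * cos (snd z), exp (fst z) * sin (snd z))%R.

(** principal argument, with values in (-PI, PI] *)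
Definition Arg (z : C) : R :=
  let x := fst z in let y := snd z in
  if Rlt_dec 0 x then atan (y / x)
  else if Rlt_dec x 0 then
    (if Rle_dec 0 y then atan (y / x) + PI else atan (y / x) - PI)%R
  else if Rlt_dec 0 y then (PI / 2)%R
  else if Rlt_dec y 0 then (- (PI / 2))%R
  else 0%R.

Definition CLog (z : C) : C := (ln (Cmod z), Arg z).

Definition CRInt01 (f : R -> C) : C :=
  (RInt (fun t => fst (f t)) 0 1, RInt (fun t => snd (f t)) 0 1).

(** Dilogarithm (principal branch):
    Li2 w = - \int_0^w Log(1-u)/u du, along the segment u = t w, for w not in
    (1, +oo).  For real w = x > 1 (on the branch cut) we take the value
    consistent with the principal Log (Arg in (-PI,PI]) of 1 - w, i.e. the
    limit from below, computed along the path u(t) = t x - i t (1 - t). *)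
Definition Li2 (w : C) : C :=
  if Rlt_dec 1 (fst w) then
    if Req_EM_T (snd w) 0 then
      let x := fst w in
      - CRInt01 (fun t =>
          let u : C := (t * x, - (t * (1 - t)))%R in
          let du : C := (x, - (1 - 2 * t))%R in
          CLog (1 - u) / u * du)
    else - CRInt01 (fun t => CLog (1 - RtoC t * w) / RtoC t)
  else - CRInt01 (fun t => CLog (1 - RtoC t * w) / RtoC t).

Definition twopii : C := 2 * RtoC PI * Ci.

(** Lifted dilogarithm L(zeta0, zeta1), a representative in C of the value
    in C / 2 pi^2 Z. *)
Definition Lhat (z0 z1 : C) : C :=
  let w := Cexp z0 in
  let p0 := (z0 - CLog w) / twopii in
  let p1 := (z1 + CLog (1 - w)) / twopii in
  Li2 w + (1 / 2) * CLog w * CLog (1 - w) - RtoC (PI ^ 2 / 6)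
  + RtoC PI * Ci * (p0 * CLog (1 - w) + p1 * CLog w).

Definition E2 (x : C) : C := Cexp (twopii * x).

(** shape parameters chi = (a, b, m) of a segment *)
Record shape := Shape { sa : C; sb : C; sm : C }.

(** crossing sign: [pos = true] for epsilon = +1, false for epsilon = -1 *)
Definition epsC (pos : bool) : C := if pos then 1 else -1.

Definition shape_nz (s : shape) : Prop :=
  sa s <> 0 /\ sb s <> 0 /\ sm s <> 0.

(** shaping equations at a crossing, with incoming segments 1 (upper left),
    2 (lower left) and outgoing 1' (lower right, continuing 1),
    2' (upper right, continuing 2). *)
Definition shaping_at (pos : bool) (s1 s2 s1' s2' : shape) : Prop :=
  shape_nz s1 /\ shape_nz s2 /\ shape_nz s1' /\ shape_nz s2' /\
  sm s1' = sm s1 /\ sm s2' = sm s2 /\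
  let a1 := sa s1 in let b1 := sb s1 in let m1 := sm s1 in
  let a2 := sa s2 in let b2 := sb s2 in let m2 := sm s2 in
  if pos then
    let A := 1 - m1 * b1 / b2 * (1 - a1 / m1) * (1 - 1 / (m2 * a2)) in
    A <> 0 /\
    sa s1' = a1 / A /\ sa s2' = a2 * A /\
    (1 - m2 * a2 * (1 - b2 / (m1 * b1))) <> 0 /\
    sb s1' = m2 * b2 / m1 * / (1 - m2 * a2 * (1 - b2 / (m1 * b1))) /\
    sb s2' = b1 * (1 - m1 / a1 * (1 - b2 / (m1 * b1)))
  else
    let A := 1 - b2 / (m1 * b1) * (1 - m1 * a1) * (1 - m2 / a2) in
    A <> 0 /\
    sa s1' = a1 / A /\ sa s2' = a2 * A /\
    sb s1' = m2 * b2 / m1 * (1 - a2 / m2 * (1 - m1 * b1 / b2)) /\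
    (1 - 1 / (m1 * a1) * (1 - m1 * b1 / b2)) <> 0 /\
    sb s2' = b1 * / (1 - 1 / (m1 * a1) * (1 - m1 * b1 / b2)).

Definition pinched (s1 s2' : shape) : Prop := sb s2' = sb s1.

(** local flattening parameters at a crossing:
    mu1, mu2 (components of the strands through 1 and 2),
    beta_1, beta_2, beta_1', beta_2', gamma_N, gamma_W, gamma_S, gamma_E,
    and kappa (only meaningful at a non-pinched crossing). *)
Record flat := Flat {
  mu1 : C; mu2 : C;
  be1 : C; be2 : C; be1' : C; be2' : C;
  gN : C; gW : C; gS : C; gE : C;
  kap : C }.

Definition ratio_eps (pos : bool) (s1 s2' : shape) : C :=
  if pos then sb s2' / sb s1 else sb s1 / sb s2'.

(** flattening conditions at the crossing.  Regions: segment 1 has W on its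
    right and N on its left, 2 has S right / W left, 1' has S right / E left,
    2' has E right / N left. *)
Definition flattening_at (pos : bool) (s1 s2 s1' s2' : shape) (f : flat) : Prop :=
  E2 (mu1 f) = sm s1 /\ E2 (mu2 f) = sm s2 /\
  E2 (be1 f) = sb s1 /\ E2 (be2 f) = sb s2 /\
  E2 (be1' f) = sb s1' /\ E2 (be2' f) = sb s2' /\
  E2 (gW f - gN f) = sa s1 /\ E2 (gS f - gW f) = sa s2 /\
  E2 (gS f - gE f) = sa s1' /\ E2 (gE f - gN f) = sa s2' /\
  (~ pinched s1 s2' -> E2 (kap f) = E2 (gN f) / (1 - ratio_eps pos s1 s2')).

Definition Ceq_dec (z w : C) : {z = w} + {z <> w}.
Proof.
  destruct z as [x y], w as [x' y'].
  destruct (Req_EM_T x x') as [e1|n1].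
  - destruct (Req_EM_T y y') as [e2|n2].
    + left; subst; reflexivity.
    + right; intro H; inversion H; contradiction.
  - right; intro H; inversion H; contradiction.
Defined.

(** the crossing contribution V(c, f), a representative in C of the value in
    C / 2 pi^2 i Z *)
Definition crossing_volume (pos : bool) (s1 s2' : shape) (f : flat) : C :=
  let e := epsC pos in
  if Ceq_dec (sb s2') (sb s1) then
    2 * RtoC (PI ^ 2) * Ci *
      (be1 f * (gW f - gN f) - be1' f * (gS f - gE f)
       + be2 f * (gS f - gW f) - be2' f * (gE f - gN f)
       - mu1 f * (e * (be1 f - be1' f + mu2 f) + gS f - gW f)
       - mu2 f * (e * (be2' f - be2 f + mu1 f) + gE f - gS f))
  else
    let zN0 := twopii * e * (be2' f - be1 f) in
    let zN1 := twopii * (kap f - gN f) in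
    let zW0 := twopii * e * (be2 f - be1 f - mu1 f) in
    let zW1 := twopii * (kap f - gW f + e * mu1 f) in
    let zS0 := twopii * e * (be2 f - be1' f + mu2 f - mu1 f) in
    let zS1 := twopii * (kap f - gS f + e * (mu1 f - mu2 f)) in
    let zE0 := twopii * e * (be2' f - be1' f + mu2 f) in
    let zE1 := twopii * (kap f - gE f - e * mu2 f) in
    - Ci * e * (Lhat zN0 zN1 - Lhat zW0 zW1 + Lhat zS0 zS1 - Lhat zE0 zE1).

Inductive param :=
  Pmu1 | Pmu2 | Pbe1 | Pbe2 | Pbe1' | Pbe2' | PgN | PgW | PgS | PgE.

Definition shift_param (p : param) (k : Z) (f : flat) : flat :=
  let K := RtoC (IZR k) in
  let '(Flat m1 m2 b1 b2 b1' b2' n w s e kp) := f in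
  match p with
  | Pmu1 => Flat (m1 + K) m2 b1 b2 b1' b2' n w s e kp
  | Pmu2 => Flat m1 (m2 + K) b1 b2 b1' b2' n w s e kp
  | Pbe1 => Flat m1 m2 (b1 + K) b2 b1' b2' n w s e kp
  | Pbe2 => Flat m1 m2 b1 (b2 + K) b1' b2' n w s e kp
  | Pbe1' => Flat m1 m2 b1 b2 (b1' + K) b2' n w s e kp
  | Pbe2' => Flat m1 m2 b1 b2 b1' (b2' + K) n w s e kp
  | PgN => Flat m1 m2 b1 b2 b1' b2' (n + K) w s e kp
  | PgW => Flat m1 m2 b1 b2 b1' b2' n (w + K) s e kp
  | PgS => Flat m1 m2 b1 b2 b1' b2' n w (s + K) e kp
  | PgE => Flat m1 m2 b1 b2 b1' b2' n w s (e + K) kp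
  end.

Definition vol_coef (pos : bool) (p : param) (f : flat) : C :=
  let e := epsC pos in
  match p with
  | Pmu1 => - e * (be1' f - be1 f) + gW f - gS f
  | Pmu2 => e * (be2' f - be2 f) + gS f - gE f
  | Pbe1 => gW f - gN f - e * mu1 f
  | Pbe2 => gS f - gW f + e * mu2 f
  | Pbe1' => gE f - gS f + e * mu1 f
  | Pbe2' => gN f - gE f - e * mu2 f
  | PgN => be1 f - be2' f
  | PgW => be2 f - be1 f - mu1 f
  | PgS => be1' f + mu1 f - be2 f - mu2 f
  | PgE => be2' f + mu2 f - be1' f
  end.

(* Main.v *)
Require Import Defs.
From Stdlib Require Import Reals ZArith Lia Lra.
From Coquelicot Require Import Coquelicot.
Open Scope C_scope.

Lemma cos_perZ (x : R) (n : Z) : cos (x + 2 * IZR n * PI) = cos x.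
Proof.
  destruct (Z_le_gt_dec 0 n) as [h|h].
  - rewrite <- (Z2Nat.id n) by lia. rewrite <- INR_IZR_INZ. apply cos_period.
  - assert (E : IZR n = (- INR (Z.to_nat (- n)))%R).
    { rewrite INR_IZR_INZ, Z2Nat.id by lia. rewrite opp_IZR. ring. }
    rewrite E. rewrite <- (cos_period (x + 2 * - INR (Z.to_nat (- n)) * PI) (Z.to_nat (-n))).
    f_equal. ring.
Qed.

Lemma sin_perZ (x : R) (n : Z) : sin (x + 2 * IZR n * PI) = sin x.
Proof.
  destruct (Z_le_gt_dec 0 n) as [h|h].
  - rewrite <- (Z2Nat.id n) by lia. rewrite <- INR_IZR_INZ. apply sin_period.
  - assert (E : IZR n = (- INR (Z.to_nat (- n)))%R).
    { rewrite INR_IZR_INZ, Z2Nat.id by lia. rewrite opp_IZR. ring. }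
    rewrite E. rewrite <- (sin_period (x + 2 * - INR (Z.to_nat (- n)) * PI) (Z.to_nat (-n))).
    f_equal. ring.
Qed.

Lemma Arg_principal (r y : R) : (0 < r)%R -> (- PI < y <= PI)%R ->
  Arg (r * cos y, r * sin y)%R = y.
Proof.
  intros hr [h1 h2]. unfold Arg; simpl.
  assert (Ht : (r * sin y / (r * cos y) = tan y)%R -> True) by auto.
  assert (PIpos := PI_RGT_0).
  destruct (Rlt_le_dec y (- (PI/2))) as [c1|c1].
  -
    assert (hc : (cos y < 0)%R).
    { rewrite <- (cos_period y 1). simpl. apply cos_lt_0; lra. }
    assert (hs : (sin y < 0)%R) by (apply sin_lt_0_var; lra).
    destruct (Rlt_dec 0 (r * cos y)) as [h|_]; [nra|].
    destruct (Rlt_dec (r * cos y) 0) as [_|h]; [|nra].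
    destruct (Rle_dec 0 (r * sin y)) as [h|_]; [nra|].
    replace (r * sin y / (r * cos y))%R with (tan (y + PI)).
    + rewrite atan_tan; [ring|lra].
    + unfold tan. rewrite neg_sin, neg_cos. field. split; lra.
  - destruct (Rle_lt_or_eq_dec _ _ c1) as [c2|c2].
    + destruct (Rlt_le_dec y (PI/2)) as [c3|c3].
      * assert (hc : (0 < cos y)%R) by (apply cos_gt_0; lra).
        destruct (Rlt_dec 0 (r * cos y)) as [_|h]; [|nra].
        replace (r * sin y / (r * cos y))%R with (tan y).
        -- apply atan_tan; lra.
        -- unfold tan. field. lra.
      * destruct (Rle_lt_or_eq_dec _ _ c3) as [c4|c4].
        -- assert (hc : (cos y < 0)%R) by (apply cos_lt_0; lra).
           assert (hs : (0 <= sin y)%R) by (apply sin_ge_0; lra).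
           destruct (Rlt_dec 0 (r * cos y)) as [h|_]; [nra|].
           destruct (Rlt_dec (r * cos y) 0) as [_|h]; [|nra].
           destruct (Rle_dec 0 (r * sin y)) as [_|h]; [|nra].
           replace (r * sin y / (r * cos y))%R with (tan (y - PI)).
           ++ rewrite atan_tan; [ring|lra].
           ++ unfold tan. rewrite sin_minus, cos_minus, sin_PI, cos_PI. field. lra.
        -- subst y. rewrite cos_PI2, sin_PI2.
           rewrite Rmult_0_r, Rmult_1_r.
           destruct (Rlt_dec 0 0) as [h|_]; [lra|].
           destruct (Rlt_dec 0 0) as [h|_]; [lra|].
           destruct (Rlt_dec 0 r) as [_|h]; [reflexivity|lra].
    + rewrite <- c2. rewrite cos_neg, sin_neg, cos_PI2, sin_PI2.
      rewrite Rmult_0_r.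
      destruct (Rlt_dec 0 0) as [h|_]; [lra|].
      destruct (Rlt_dec 0 0) as [h|_]; [lra|].
      repeat match goal with |- context[Rlt_dec ?a ?b] => destruct (Rlt_dec a b) end; lra.
Qed.


Lemma CLog_Cexp (z : C) : exists n : Z, CLog (Cexp z) = z - twopii * RtoC (IZR n).
Proof.
  destruct z as [x y].
  assert (PIpos := PI_RGT_0).
  set (u := ((PI - y) / (2 * PI))%R).
  destruct (archimed u) as [a1 a2].
  exists (1 - up u)%Z.
  set (y' := (y - 2 * IZR (1 - up u) * PI)%R).
  assert (Hy : (- PI < y' <= PI)%R).
  { unfold y'. rewrite minus_IZR. unfold u in *.
    assert (IZR (up ((PI - y) / (2 * PI))) * (2 * PI) > (PI - y))%R.
    { apply Rlt_gt. apply (Rmult_lt_reg_r (/ (2*PI))). apply Rinv_0_lt_compat; lra.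
      rewrite Rmult_assoc, Rinv_r by lra. rewrite Rmult_1_r. exact a1. }
    assert (IZR (up ((PI - y) / (2 * PI))) * (2 * PI) <= (PI - y) + 2 * PI)%R.
    { apply (Rmult_le_reg_r (/ (2*PI))). apply Rinv_0_lt_compat; lra.
      rewrite Rmult_assoc, Rinv_r by lra. rewrite Rmult_1_r.
      replace ((PI - y + 2 * PI) * / (2 * PI))%R with ((PI - y) / (2*PI) + 1)%R by (field; lra).
      lra. }
    lra. }
  assert (Ey : y = (y' + 2 * IZR (1 - up u) * PI)%R) by (unfold y'; ring).
  unfold CLog, Cexp. simpl.
  rewrite Ey, cos_perZ, sin_perZ. rewrite Arg_principal; [|apply exp_pos|exact Hy].
  assert (Hm : Cmod ((exp x * cos y')%R, (exp x * sin y')%R) = exp x).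
  { unfold Cmod. simpl.
    replace ((exp x * cos y') * ((exp x * cos y') * 1) + (exp x * sin y') * ((exp x * sin y') * 1))%R
      with (exp x * exp x)%R.
    - apply sqrt_square. left; apply exp_pos.
    - pose proof (sin2_cos2 y'). unfold Rsqr in *. nra. }
  rewrite Hm, ln_exp.
  unfold twopii, Cminus, Cplus, Copp, Cmult, RtoC, Ci. simpl.
  apply injective_projections; simpl; ring.
Qed.


Lemma Cmult_eq_reg_l (c x y : C) : c * x = c * y -> c <> 0 -> x = y.
Proof.
  intros H hc. replace x with (/ c * (c * x)) by (field; auto).
  rewrite H. field. auto.
Qed.

Lemma Cexp_add (a b : C) : Cexp (a + b) = Cexp a * Cexp b.
Proof.
  destruct a as [a1 a2], b as [b1 b2]. unfold Cexp, Cmult, Cplus. simpl.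
  rewrite exp_plus, cos_plus, sin_plus.
  apply injective_projections; simpl; ring.
Qed.

Lemma Cexp_0 : Cexp 0 = 1.
Proof.
  unfold Cexp. simpl. rewrite exp_0, cos_0, sin_0.
  apply injective_projections; simpl; ring.
Qed.

Lemma Cexp_nz (z : C) : Cexp z <> 0.
Proof.
  intro H. assert (H2 : Cexp (z + - z) = 1) by (replace (z + - z) with (RtoC 0) by ring; apply Cexp_0).
  rewrite Cexp_add, H, Cmult_0_l in H2.
  injection H2. lra.
Qed.

Lemma Cexp_opp (z : C) : Cexp (- z) = / Cexp z.
Proof.
  assert (H2 : Cexp z * Cexp (- z) = 1)
    by (rewrite <- Cexp_add; replace (z + - z) with (RtoC 0) by ring; apply Cexp_0).
  pose proof (Cexp_nz z).
  apply (Cmult_eq_reg_l (Cexp z)); auto. rewrite H2. field. auto.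
Qed.

Lemma Cexp_2pin (n : Z) : Cexp (twopii * RtoC (IZR n)) = 1.
Proof.
  replace (twopii * RtoC (IZR n)) with ((0, 0 + 2 * IZR n * PI)%R : C).
  - unfold Cexp. simpl. rewrite cos_perZ, sin_perZ, exp_0, cos_0, sin_0.
    apply injective_projections; simpl; ring.
  - unfold twopii, Cmult, RtoC, Ci. apply injective_projections; simpl; ring.
Qed.

Lemma Cexp_shift (z : C) (n : Z) : Cexp (z + twopii * RtoC (IZR n)) = Cexp z.
Proof. rewrite Cexp_add, Cexp_2pin. apply Cmult_1_r. Qed.

Lemma E2_add x y : E2 (x + y) = E2 x * E2 y.
Proof. unfold E2. rewrite <- Cexp_add. f_equal. ring. Qed.
Lemma E2_nz x : E2 x <> 0.
Proof. apply Cexp_nz. Qed.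
Lemma E2_opp x : E2 (- x) = / E2 x.
Proof. unfold E2. rewrite <- Cexp_opp. f_equal. ring. Qed.
Lemma E2_sub x y : E2 (x - y) = E2 x / E2 y.
Proof. unfold Cminus, Cdiv. rewrite E2_add, E2_opp. reflexivity. Qed.
Lemma E2_one x : E2 (1 * x) = E2 x.
Proof. f_equal. ring. Qed.
Lemma E2_mone x : E2 (-1 * x) = / E2 x.
Proof. rewrite <- E2_opp. f_equal. ring. Qed.

Lemma twopii_nz : twopii <> 0.
Proof.
  unfold twopii. intro H. apply (f_equal Im) in H. unfold Im in H. simpl in H.
  pose proof PI_RGT_0. nra.
Qed.

Lemma E2_eq (x y : C) : E2 x = E2 y -> exists m : Z, x = y + RtoC (IZR m).
Proof.
  intro H. destruct (CLog_Cexp (twopii * x)) as [n1 h1].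
  destruct (CLog_Cexp (twopii * y)) as [n2 h2].
  unfold E2 in H. rewrite H in h1. rewrite h1 in h2.
  exists (n1 - n2)%Z. rewrite minus_IZR, RtoC_minus.
  apply (Cmult_eq_reg_l twopii); [|apply twopii_nz].
  transitivity (twopii * x - twopii * RtoC (IZR n1) + twopii * RtoC (IZR n1)); [ring|].
  rewrite h2. ring.
Qed.

Lemma Cexp_inv_rel (z u : C) : Cexp z * u = 1 -> u = Cexp (- z).
Proof.
  intro H. rewrite Cexp_opp. pose proof (Cexp_nz z).
  apply (Cmult_eq_reg_l (Cexp z)); auto. rewrite H. field. auto.
Qed.

Lemma Lhat_shift (z0 z1 z0' z1' : C) (a b n0 n1 : Z) :
  z0' = z0 + twopii * RtoC (IZR a) -> z1' = z1 + twopii * RtoC (IZR b) ->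
  CLog (Cexp z0) = z0 - twopii * RtoC (IZR n0) ->
  CLog (1 - Cexp z0) = - z1 - twopii * RtoC (IZR n1) ->
  Lhat z0' z1' = Lhat z0 z1 + RtoC PI * Ci * (RtoC (IZR b) * z0 - RtoC (IZR a) * z1)
     - RtoC PI * Ci * twopii * (RtoC (IZR a) * RtoC (IZR n1) + RtoC (IZR b) * RtoC (IZR n0)).
Proof.
  intros -> -> h0 h1. unfold Lhat. rewrite Cexp_shift. rewrite h0, h1.
  field. apply twopii_nz.
Qed.


Lemma nz_pos (a2 b1 m1 b2 m2 : C) : b1 <> 0 -> m1 <> 0 ->
  1 - m2 * a2 * (1 - b2 / (m1 * b1)) <> 0 -> m1 * b1 - m2 * a2 * (m1 * b1 - b2) <> 0.
Proof.
  intros h1 h2 h Hc. apply h.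
  replace (1 - m2 * a2 * (1 - b2 / (m1 * b1))) with ((m1 * b1 - m2 * a2 * (m1 * b1 - b2)) / (m1 * b1))
    by (field; auto).
  rewrite Hc. unfold Cdiv. ring.
Qed.

Lemma nz_neg (a1 b1 m1 b2 : C) : a1 <> 0 -> m1 <> 0 -> b2 <> 0 ->
  1 - 1 / (m1 * a1) * (1 - m1 * b1 / b2) <> 0 -> m1 * a1 * b2 - (b2 - m1 * b1) <> 0.
Proof.
  intros h1 h2 h3 h Hc. apply h.
  replace (1 - 1 / (m1 * a1) * (1 - m1 * b1 / b2)) with ((m1 * a1 * b2 - (b2 - m1 * b1)) / (m1 * a1 * b2))
    by (field; auto).
  rewrite Hc. unfold Cdiv. ring.
Qed.

Section Pos.
Set Default Proof Using "All".
Variables (a1 b1 m1 a2 b2 m2 a2' b1' b2' : C).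
Hypotheses (H1: a1 <> 0) (H2: b1 <> 0) (H3: m1 <> 0) (H4: a2 <> 0) (H5: b2 <> 0) (H6: m2 <> 0).
Hypothesis HDb : 1 - m2 * a2 * (1 - b2 / (m1 * b1)) <> 0.
Hypothesis Hb1' : b1' = m2 * b2 / m1 * / (1 - m2 * a2 * (1 - b2 / (m1 * b1))).
Hypothesis Hb2' : b2' = b1 * (1 - m1 / a1 * (1 - b2 / (m1 * b1))).
Hypothesis Ha2' : a2' = a2 * (1 - m1 * b1 / b2 * (1 - a1 / m1) * (1 - 1 / (m2 * a2))).

Lemma pW : 1 - b2 / b1 / m1 = (1 - b2' / b1) * (a1 / m1).
Proof. subst. field. auto. Qed.
Lemma pS : 1 - b2 / b1' * m2 / m1 = (1 - b2' / b1) * (a1 * a2 * m2 / m1).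
Proof. pose proof (nz_pos a2 b1 m1 b2 m2 H2 H3 HDb). subst. field. tauto. Qed.
Lemma pE : 1 - b2' / b1' * m2 = (1 - b2' / b1) * (a2' * m2).
Proof. pose proof (nz_pos a2 b1 m1 b2 m2 H2 H3 HDb). subst. field. tauto. Qed.
End Pos.

Section Neg.
Set Default Proof Using "All".
Variables (a1 b1 m1 a2 b2 m2 a2' b1' b2' : C).
Hypotheses (H1: a1 <> 0) (H2: b1 <> 0) (H3: m1 <> 0) (H4: a2 <> 0) (H5: b2 <> 0) (H6: m2 <> 0).
Hypotheses (H7 : b1' <> 0) (H8 : b2' <> 0).
Hypothesis HDn : 1 - 1 / (m1 * a1) * (1 - m1 * b1 / b2) <> 0.
Hypothesis Hb1' : b1' = m2 * b2 / m1 * (1 - a2 / m2 * (1 - m1 * b1 / b2)).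
Hypothesis Hb2' : b2' = b1 * / (1 - 1 / (m1 * a1) * (1 - m1 * b1 / b2)).
Hypothesis Ha2' : a2' = a2 * (1 - b2 / (m1 * b1) * (1 - m1 * a1) * (1 - m2 / a2)).

Lemma nW : 1 - / (b2 / b1 / m1) = (1 - b1 / b2') * (a1 * m1).
Proof.
  pose proof (nz_neg a1 b1 m1 b2 H1 H3 H5 HDn).
  replace (/ (b2 / b1 / m1)) with (b1 * m1 / b2) by (field; auto).
  subst. field. tauto. Qed.
Lemma nS : 1 - / (b2 / b1' * m2 / m1) = (1 - b1 / b2') * (a1 * a2 * m1 / m2).
Proof.
  pose proof (nz_neg a1 b1 m1 b2 H1 H3 H5 HDn).
  replace (/ (b2 / b1' * m2 / m1)) with (b1' * m1 / b2 / m2) by (field; auto).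
  subst. field. tauto. Qed.
Lemma nE : 1 - / (b2' / b1' * m2) = (1 - b1 / b2') * (a2' / m2).
Proof.
  pose proof (nz_neg a1 b1 m1 b2 H1 H3 H5 HDn).
  replace (/ (b2' / b1' * m2)) with (b1' / b2' / m2) by (field; auto).
  subst. field. tauto. Qed.
End Neg.


Lemma Cexp_T3 c x : Cexp (twopii * c * x) = E2 (c * x).
Proof. unfold E2. f_equal. ring. Qed.
Lemma Cexp_T2 x : Cexp (twopii * x) = E2 x.
Proof. reflexivity. Qed.

Ltac e2x := repeat (rewrite ?E2_one, ?E2_mone, ?E2_sub, ?E2_add).

Lemma regions (pos : bool) (s1 s2 s1' s2' : shape) (f : flat) :
  shaping_at pos s1 s2 s1' s2' -> flattening_at pos s1 s2 s1' s2' f ->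
  sb s2' <> sb s1 ->
  let e := epsC pos in
  Cexp (twopii * (kap f - gN f)) * (1 - Cexp (twopii * e * (be2' f - be1 f))) = 1 /\
  Cexp (twopii * (kap f - gW f + e * mu1 f)) * (1 - Cexp (twopii * e * (be2 f - be1 f - mu1 f))) = 1 /\
  Cexp (twopii * (kap f - gS f + e * (mu1 f - mu2 f))) * (1 - Cexp (twopii * e * (be2 f - be1' f + mu2 f - mu1 f))) = 1 /\
  Cexp (twopii * (kap f - gE f - e * mu2 f)) * (1 - Cexp (twopii * e * (be2' f - be1' f + mu2 f))) = 1.
Proof.
  intros Hs Hf Hnp e.
  destruct Hs as [[a1z [b1z m1z]] [[a2z [b2z m2z]] [[a1'z [b1'z m1'z]] [[a2'z [b2'z m2'z]] [_ [_ Hsh]]]]]].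
  destruct Hf as [Hm1 [Hm2 [Hb1 [Hb2 [Hb1' [Hb2' [Ha1 [Ha2 [Ha1' [Ha2' Hk]]]]]]]]]].
  destruct f as [m1 m2 b1 b2 b1' b2' gn gw gs ge kp]. simpl in *.
  specialize (Hk Hnp).
  set (G := E2 gn) in *.
  assert (HG : G <> 0) by apply E2_nz.
  assert (HgW : E2 gw = sa s1 * G).
  { rewrite <- Ha1. unfold G. rewrite <- E2_add. f_equal. ring. }
  assert (HgS : E2 gs = sa s2 * (sa s1 * G)).
  { rewrite <- Ha2, <- HgW. rewrite <- E2_add. f_equal. ring. }
  assert (HgE : E2 ge = sa s2' * G).
  { rewrite <- Ha2'. unfold G. rewrite <- E2_add. f_equal. ring. }
  unfold e; clear e.
  destruct pos; cbv zeta in Hsh; unfold ratio_eps in Hk; cbn [epsC].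
  - destruct Hsh as [HA [_ [Ha2'e [HDb [Hb1'e Hb2'e]]]]].
    assert (HD : 1 - sb s2' / sb s1 <> 0).
    { intro Hc. apply Hnp. apply (f_equal (fun t => (1 - t) * sb s1)) in Hc.
      replace ((1 - (1 - sb s2' / sb s1)) * sb s1) with (sb s2') in Hc by (field; auto).
      rewrite Hc. ring. }
    assert (HD' : sb s1 - sb s2' <> 0).
    { intro Hc. apply Hnp. apply (f_equal (fun t => sb s1 - t)) in Hc. 
      replace (sb s1 - (sb s1 - sb s2')) with (sb s2') in Hc by ring. rewrite Hc. ring. }
    rewrite !Cexp_T3, !Cexp_T2. e2x.
    rewrite Hm1, Hm2, Hb1, Hb2, Hb1', Hb2', HgW, HgS, HgE, Hk.
    fold G.
    split; [|split; [|split]].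
    + field; repeat split; auto.
    + rewrite (pW (sa s1) (sb s1) (sm s1) (sa s2) (sb s2) (sm s2) (sa s2') (sb s1') (sb s2')); auto.
      field; repeat split; auto.
    + rewrite (pS (sa s1) (sb s1) (sm s1) (sa s2) (sb s2) (sm s2) (sa s2') (sb s1') (sb s2')); auto.
      field; repeat split; auto.
    + rewrite (pE (sa s1) (sb s1) (sm s1) (sa s2) (sb s2) (sm s2) (sa s2') (sb s1') (sb s2')); auto.
      field; repeat split; auto.
  - destruct Hsh as [HA [_ [Ha2'e [Hb1'e [HDn Hb2'e]]]]].
    assert (HD : 1 - sb s1 / sb s2' <> 0).
    { intro Hc. apply Hnp. apply (f_equal (fun t => (1 - t) * sb s2')) in Hc.
      replace ((1 - (1 - sb s1 / sb s2')) * sb s2') with (sb s1) in Hc by (field; auto).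
      rewrite Hc. ring. }
    assert (HD' : sb s2' - sb s1 <> 0).
    { intro Hc. apply Hnp. apply (f_equal (fun t => sb s2' - t)) in Hc. 
      replace (sb s2' - (sb s2' - sb s1)) with (sb s1) in Hc by ring. rewrite Hc. ring. }
    rewrite !Cexp_T3, !Cexp_T2. e2x.
    rewrite Hm1, Hm2, Hb1, Hb2, Hb1', Hb2', HgW, HgS, HgE, Hk.
    fold G.
    split; [|split; [|split]].
    + field; repeat split; auto.
    + rewrite (nW (sa s1) (sb s1) (sm s1) (sa s2) (sb s2) (sm s2) (sa s2') (sb s1') (sb s2')); auto.
      field; repeat split; auto.
    + rewrite (nS (sa s1) (sb s1) (sm s1) (sa s2) (sb s2) (sm s2) (sa s2') (sb s1') (sb s2')); auto.
      field; repeat split; auto.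
    + rewrite (nE (sa s1) (sb s1) (sm s1) (sa s2) (sb s2) (sm s2) (sa s2') (sb s1') (sb s2')); auto.
      field; repeat split; auto.
Qed.


Definition KZ (z : Z) : C := RtoC (IZR z).

Definition shift_all (d : param -> Z) (f : flat) : flat :=
  Flat (mu1 f + KZ (d Pmu1)) (mu2 f + KZ (d Pmu2))
       (be1 f + KZ (d Pbe1)) (be2 f + KZ (d Pbe2)) (be1' f + KZ (d Pbe1')) (be2' f + KZ (d Pbe2'))
       (gN f + KZ (d PgN)) (gW f + KZ (d PgW)) (gS f + KZ (d PgS)) (gE f + KZ (d PgE)) (kap f).

Definition lin_coef (pos : bool) (d : param -> Z) (f : flat) : C :=
  KZ (d Pmu1) * vol_coef pos Pmu1 f + KZ (d Pmu2) * vol_coef pos Pmu2 f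
  + KZ (d Pbe1) * vol_coef pos Pbe1 f + KZ (d Pbe2) * vol_coef pos Pbe2 f
  + KZ (d Pbe1') * vol_coef pos Pbe1' f + KZ (d Pbe2') * vol_coef pos Pbe2' f
  + KZ (d PgN) * vol_coef pos PgN f + KZ (d PgW) * vol_coef pos PgW f
  + KZ (d PgS) * vol_coef pos PgS f + KZ (d PgE) * vol_coef pos PgE f.

Lemma region_ok z0 z1 : Cexp z1 * (1 - Cexp z0) = 1 ->
  exists n0 n1 : Z, CLog (Cexp z0) = z0 - twopii * RtoC (IZR n0) /\
                    CLog (1 - Cexp z0) = - z1 - twopii * RtoC (IZR n1).
Proof.
  intro H. destruct (CLog_Cexp z0) as [n0 h0]. apply Cexp_inv_rel in H.
  destruct (CLog_Cexp (- z1)) as [n1 h1]. exists n0, n1. split; auto. rewrite H. exact h1.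
Qed.

Lemma pinched_rel (pos : bool) (s1 s2 s1' s2' : shape) (f : flat) :
  shaping_at pos s1 s2 s1' s2' -> flattening_at pos s1 s2 s1' s2' f ->
  sb s2' = sb s1 ->
  exists N1 N2 N3 : Z, be2 f = be1 f + mu1 f + KZ N1 /\ be1' f = be1 f + mu2 f + KZ N2
    /\ be2' f = be1 f + KZ N3.
Proof.
  intros Hs Hf Hp.
  destruct Hs as [[a1z [b1z m1z]] [[a2z [b2z m2z]] [[a1'z [b1'z m1'z]] [[a2'z [b2'z m2'z]] [_ [_ Hsh]]]]]].
  destruct Hf as [Hm1 [Hm2 [Hb1 [Hb2 [Hb1' [Hb2' _]]]]]].
  assert (R : sb s2 = sm s1 * sb s1 /\ sb s1' = sm s2 * sb s1).
  { destruct pos; cbv zeta in Hsh.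
    - destruct Hsh as [HA [_ [Ha2'e [HDb [Hb1'e Hb2'e]]]]].
      assert (X0 : 1 - sb s2 / (sm s1 * sb s1) = (sb s1 - sb s2') * sa s1 / (sb s1 * sm s1)).
      { rewrite Hb2'e. field; repeat split; auto. }
      rewrite Hp in X0. replace ((sb s1 - sb s1) * sa s1 / (sb s1 * sm s1)) with (RtoC 0) in X0
        by (field; repeat split; auto).
      assert (E2' : sb s2 = sm s1 * sb s1).
      { replace (sb s2) with (sm s1 * sb s1 * (1 - (1 - sb s2 / (sm s1 * sb s1)))) by (field; repeat split; auto).
        rewrite X0. ring. }
      split; auto. rewrite Hb1'e, X0, E2'. field; repeat split; auto.
    - destruct Hsh as [HA [_ [Ha2'e [Hb1'e [HDn Hb2'e]]]]].
      pose proof (nz_neg _ _ _ _ a1z m1z b2z HDn).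
      assert (Y0 : 1 - sm s1 * sb s1 / sb s2 = (sb s2' - sb s1) / sb s2' * (sm s1 * sa s1)).
      { rewrite Hb2'e. field; repeat split; auto. }
      rewrite Hp in Y0. replace ((sb s1 - sb s1) / sb s1 * (sm s1 * sa s1)) with (RtoC 0) in Y0
        by (field; repeat split; auto).
      assert (E2' : sb s2 = sm s1 * sb s1).
      { replace (sm s1 * sb s1) with (sb s2 * (1 - (1 - sm s1 * sb s1 / sb s2))) by (field; repeat split; auto).
        rewrite Y0. ring. }
      split; auto. rewrite Hb1'e, Y0, E2'. field; repeat split; auto. }
  destruct R as [R1 R2].
  destruct (E2_eq (be2 f) (be1 f + mu1 f)) as [N1 h1].
  { rewrite Hb2, E2_add, Hb1, Hm1, R1. ring. }
  destruct (E2_eq (be1' f) (be1 f + mu2 f)) as [N2 h2].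
  { rewrite Hb1', E2_add, Hb1, Hm2, R2. ring. }
  destruct (E2_eq (be2' f) (be1 f)) as [N3 h3].
  { rewrite Hb2', Hb1. auto. }
  exists N1, N2, N3. auto.
Qed.


Ltac clear_props := repeat match goal with H : ?P |- _ =>
  match type of P with Prop => clear H end end.
Ltac csolve := clear_props;
  repeat match goal with x : C |- _ => destruct x end;
  unfold twopii, Cminus, Cplus, Cmult, Copp, RtoC, Ci;
  apply injective_projections; cbn [fst snd]; ring.

Ltac izr := repeat (rewrite ?plus_IZR, ?minus_IZR, ?mult_IZR, ?opp_IZR);
  repeat (rewrite ?RtoC_plus, ?RtoC_minus, ?RtoC_mult, ?RtoC_opp).

Definition nP (e N1 N2 N3 : Z) (d : param -> Z) : Z :=
  (d Pmu1 * (2*e*N2) + d Pmu2 * (-2*e*(N3 - N1)) + d PgN * (2*N3) + d PgW * (-2*N1)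
   + d PgS * (2*(N1-N2)) + d PgE * (2*(N2-N3))
   + (d Pbe1 * (d PgW - d PgN) - d Pbe1' * (d PgS - d PgE) + d Pbe2 * (d PgS - d PgW)
      - d Pbe2' * (d PgE - d PgN)
      - d Pmu1 * (e * (d Pbe1 - d Pbe1' + d Pmu2) + d PgS - d PgW)
      - d Pmu2 * (e * (d Pbe2' - d Pbe2 + d Pmu1) + d PgE - d PgS)))%Z.

Arguments nP : simpl never.

Lemma p_generic (pos : bool) (s1 s2 s1' s2' : shape) (f : flat) (d : param -> Z) :
  shaping_at pos s1 s2 s1' s2' -> flattening_at pos s1 s2 s1' s2' f ->
  sb s2' = sb s1 ->
  exists n : Z, crossing_volume pos s1 s2' (shift_all d f)
    = crossing_volume pos s1 s2' f + 2 * RtoC (PI ^ 2) * Ci * (lin_coef pos d f + KZ n).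
Proof.
  intros Hs Hf Hp.
  destruct (pinched_rel pos s1 s2 s1' s2' f Hs Hf Hp) as [N1 [N2 [N3 [r1 [r2 r3]]]]].
  unfold crossing_volume; cbv zeta. destruct (Defs.Ceq_dec (sb s2') (sb s1)) as [_|c]; [|contradiction].
  destruct pos; [exists (nP 1 N1 N2 N3 d) | exists (nP (-1) N1 N2 N3 d)];
  unfold lin_coef, vol_coef, shift_all, KZ in *; destruct f; simpl in r1, r2, r3 |- *;
  subst; cbn [epsC]; unfold nP;
  izr; ring.
Qed.


Ltac eqsolve He := unfold shift_all, KZ in *; rewrite ?He; simpl; izr; ring.

Lemma PICiT : RtoC PI * Ci * twopii = - 2 * RtoC (PI ^ 2).
Proof. unfold twopii, Cmult, Copp, RtoC, Ci. apply injective_projections; cbn [fst snd]; ring. Qed.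

Lemma Lhat_shift2 (z0 z1 z0' z1' u0 u1 : C) (a b n0 n1 : Z) :
  z0 = twopii * u0 -> z1 = twopii * u1 ->
  z0' = z0 + twopii * RtoC (IZR a) -> z1' = z1 + twopii * RtoC (IZR b) ->
  CLog (Cexp z0) = z0 - twopii * RtoC (IZR n0) ->
  CLog (1 - Cexp z0) = - z1 - twopii * RtoC (IZR n1) ->
  Lhat z0' z1' = Lhat z0 z1 - 2 * RtoC (PI ^ 2) *
     (KZ b * u0 - KZ a * u1 - KZ a * KZ n1 - KZ b * KZ n0).
Proof.
  intros e0 e1 h0 h1 h2 h3. rewrite (Lhat_shift z0 z1 z0' z1' a b n0 n1 h0 h1 h2 h3).
  rewrite e0, e1. unfold KZ.
  transitivity (Lhat (twopii * u0) (twopii * u1) + (RtoC PI * Ci * twopii) *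
    (RtoC (IZR b) * u0 - RtoC (IZR a) * u1 - RtoC (IZR a) * RtoC (IZR n1) - RtoC (IZR b) * RtoC (IZR n0)));
  [ring|]. rewrite PICiT. ring.
Qed.

Lemma np_generic (pos : bool) (s1 s2 s1' s2' : shape) (f : flat) (d : param -> Z) :
  shaping_at pos s1 s2 s1' s2' -> flattening_at pos s1 s2 s1' s2' f ->
  sb s2' <> sb s1 ->
  exists n : Z, crossing_volume pos s1 s2' (shift_all d f)
    = crossing_volume pos s1 s2' f + 2 * RtoC (PI ^ 2) * Ci * (lin_coef pos d f + KZ n).
Proof.
  intros Hs Hf Hnp.
  destruct (regions pos s1 s2 s1' s2' f Hs Hf Hnp) as [RN [RW [RS RE]]].
  apply region_ok in RN as [nN0 [nN1 [hN0 hN1]]].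
  apply region_ok in RW as [nW0 [nW1 [hW0 hW1]]].
  apply region_ok in RS as [nS0 [nS1 [hS0 hS1]]].
  apply region_ok in RE as [nE0 [nE1 [hE0 hE1]]].
  set (eZ := if pos then 1%Z else (-1)%Z).
  assert (He : epsC pos = KZ eZ) by (unfold eZ; destruct pos; reflexivity).
  set (f' := shift_all d f).
  set (aN := (eZ * (d Pbe2' - d Pbe1))%Z). set (bN := (- d PgN)%Z).
  set (aW := (eZ * (d Pbe2 - d Pbe1 - d Pmu1))%Z). set (bW := (- d PgW + eZ * d Pmu1)%Z).
  set (aS := (eZ * (d Pbe2 - d Pbe1' + d Pmu2 - d Pmu1))%Z). set (bS := (- d PgS + eZ * (d Pmu1 - d Pmu2))%Z).
  set (aE := (eZ * (d Pbe2' - d Pbe1' + d Pmu2))%Z). set (bE := (- d PgE - eZ * d Pmu2)%Z).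
  assert (EN := Lhat_shift2 (twopii * epsC pos * (be2' f - be1 f)) (twopii * (kap f - gN f)) (twopii * epsC pos * (be2' f' - be1 f')) (twopii * (kap f' - gN f')) (epsC pos * (be2' f - be1 f)) (kap f - gN f) aN bN nN0 nN1
    ltac:(ring) ltac:(ring) ltac:(unfold f', aN; eqsolve He) ltac:(unfold f', bN; eqsolve He) hN0 hN1).
  assert (EW := Lhat_shift2 (twopii * epsC pos * (be2 f - be1 f - mu1 f)) (twopii * (kap f - gW f + epsC pos * mu1 f)) (twopii * epsC pos * (be2 f' - be1 f' - mu1 f')) (twopii * (kap f' - gW f' + epsC pos * mu1 f')) (epsC pos * (be2 f - be1 f - mu1 f)) (kap f - gW f + epsC pos * mu1 f) aW bW nW0 nW1
    ltac:(ring) ltac:(ring) ltac:(unfold f', aW; eqsolve He) ltac:(unfold f', bW; eqsolve He) hW0 hW1).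
  assert (ES := Lhat_shift2 (twopii * epsC pos * (be2 f - be1' f + mu2 f - mu1 f)) (twopii * (kap f - gS f + epsC pos * (mu1 f - mu2 f))) (twopii * epsC pos * (be2 f' - be1' f' + mu2 f' - mu1 f')) (twopii * (kap f' - gS f' + epsC pos * (mu1 f' - mu2 f'))) (epsC pos * (be2 f - be1' f + mu2 f - mu1 f)) (kap f - gS f + epsC pos * (mu1 f - mu2 f)) aS bS nS0 nS1
    ltac:(ring) ltac:(ring) ltac:(unfold f', aS; eqsolve He) ltac:(unfold f', bS; eqsolve He) hS0 hS1).
  assert (EE := Lhat_shift2 (twopii * epsC pos * (be2' f - be1' f + mu2 f)) (twopii * (kap f - gE f - epsC pos * mu2 f)) (twopii * epsC pos * (be2' f' - be1' f' + mu2 f')) (twopii * (kap f' - gE f' - epsC pos * mu2 f')) (epsC pos * (be2' f - be1' f + mu2 f)) (kap f - gE f - epsC pos * mu2 f) aE bE nE0 nE1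
    ltac:(ring) ltac:(ring) ltac:(unfold f', aE; eqsolve He) ltac:(unfold f', bE; eqsolve He) hE0 hE1).
  unfold crossing_volume. destruct (Defs.Ceq_dec (sb s2') (sb s1)) as [c|_]; [contradiction|].
  cbv zeta. fold f'. rewrite EN, EW, ES, EE.
  exists (- eZ * ((aN * nN1 + bN * nN0) - (aW * nW1 + bW * nW0) + (aS * nS1 + bS * nS0)
                 - (aE * nE1 + bE * nE0)))%Z.
  repeat match goal with |- context [Lhat ?a ?b] => generalize (Lhat a b); intro end.
  unfold f', lin_coef, vol_coef, shift_all, KZ, aN, bN, aW, bW, aS, bS, aE, bE, eZ in *.
  destruct pos; izr; simpl; izr; ring.
Qed.


Definition dsingle (p : param) (k : Z) (q : param) : Z :=
  match p, q with
  | Pmu1, Pmu1 | Pmu2, Pmu2 | Pbe1, Pbe1 | Pbe2, Pbe2 | Pbe1', Pbe1' | Pbe2', Pbe2'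
  | PgN, PgN | PgW, PgW | PgS, PgS | PgE, PgE => k
  | _, _ => 0%Z
  end.

Lemma shift_eq p k f : shift_param p k f = shift_all (dsingle p k) f.
Proof.
  destruct p; destruct f; unfold shift_all, shift_param, KZ; simpl; f_equal; ring.
Qed.

Lemma lin_single pos p k f : lin_coef pos (dsingle p k) f = KZ k * vol_coef pos p f.
Proof. destruct p; unfold lin_coef; simpl dsingle; unfold KZ; ring. Qed.

Theorem lemma3p7 :
  forall (pos : bool) (s1 s2 s1' s2' : shape) (f : flat),
    shaping_at pos s1 s2 s1' s2' ->
    flattening_at pos s1 s2 s1' s2' f ->
    forall (p : param) (k : Z),
      exists n : Z,
        crossing_volume pos s1 s2' (shift_param p k f)
        = crossing_volume pos s1 s2' f
          + 2 * RtoC (PI ^ 2) * Ci * (RtoC (IZR k) * vol_coef pos p f + RtoC (IZR n)).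
Proof.
  intros pos s1 s2 s1' s2' f Hs Hf p k.
  destruct (Defs.Ceq_dec (sb s2') (sb s1)) as [Hp|Hnp].
  - destruct (p_generic pos s1 s2 s1' s2' f (dsingle p k) Hs Hf Hp) as [n Hn].
    exists n. rewrite shift_eq, Hn, lin_single. reflexivity.
  - destruct (np_generic pos s1 s2 s1' s2' f (dsingle p k) Hs Hf Hnp) as [n Hn].
    exists n. rewrite shift_eq, Hn, lin_single. reflexivity.
Qed.
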